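(* Under the standing assumptions (A1)–(A4), let $\alpha>0$ and $0<\gamma<\frac{1}{m-1}$, and consider the system (Algorithm A) $$\begin{aligned} \dot x&=\mathrm{Prox}_{F^m}\Big[x-\nabla F^0(x)+v+\gamma\textstyle\sum_{j=1}^{m-1}z^j\Big]-x,\\ \dot z^j&=\mathrm{Prox}_{F^j}[x-\gamma z^j]-x,\quad j=1,\dots,m-1,\\ \dot v&=-H_{nq}^{-1}(x-d)-\alpha L_{nq}v-w,\\ \dot w&=\alpha L_{nq}v, \end{aligned}$$ with state $(x,z,v,w)\in\mathbb{R}^{nq}\times\mathbb{R}^{(m-1)nq}\times\mathbb{R}^{nq}\times\mathbb{R}^{nq}$, $z=((z^1)^T,\dots,(z^{m-1})^T)^T$. If $(x^*,z^*,v^*,w^* )$ is an equilibrium of this system and $(\mathbf{1}_n\otimes I_q)^TH_{nq}w^*=\mathbf{0}_q$, then $x^*$ is a solution of the problem $\min_x \sum_i f_i(x_i)$ s.t. $\sum_i x_i=\sum_i d_i$.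
   Context: Standing setup: $n$ agents; agent $i$ has state $x_i\in\mathbb{R}^q$, and $x=(x_1^T,\dots,x_n^T)^T\in\mathbb{R}^{nq}$. Given $d_i\in\mathbb{R}^q$, $d=(d_1^T,\dots,d_n^T)^T$. Integer $m\ge 2$. Each local cost is $f_i=\sum_{j=0}^m f_i^j$; $F^j(x)=\sum_{i=1}^n f_i^j(x_i)$. $\nabla F^0(x)=(\nabla f_1^0(x_1)^T,\dots,\nabla f_n^0(x_n)^T)^T$. Assumptions: (A1) each $f_i^0$ is twice continuously differentiable and strongly convex with a common constant $c>m-1$; (A2) each $f_i^j$, $j=1,\dots,m$, is a proper closed convex function; (A3) the graph is weighted, directed and strongly connected; (A4) the problem is feasible. Proximal operator: $\mathrm{prox}_f[\theta]=\arg\min_\delta\{f(\delta)+\frac12\|\delta-\theta\|^2\}$, and for $\xi=(\xi_1,\dots,\xi_n)\in\mathbb{R}^{nq}$, $\mathrm{Prox}_{F^j}[\xi]=(\mathrm{prox}_{f_1^j}[\xi_1]^T,\dots,\mathrm{prox}_{f_n^j}[\xi_n]^T)^T$. Graph: weighted adjacency matrix $\mathcal{A}=[a_{ij}]$ ($a_{ij}>0$ iff agent $i$ receives from $j$, $a_{ii}=0$), Laplacian $L_n=D^{in}-\mathcal{A}$ with $D^{in}=\mathrm{diag}(\sum_j a_{ij})$; $h=(h_1,\dots,h_n)^T$ is the positive left eigenvector with $h^TL_n=0$, $\sum_i h_i=1$; $H=\mathrm{diag}(h_1,\dots,h_n)$, $H_{nq}=H\otimes I_q$, $L_{nq}=L_n\otimes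 I_q$. *)

(* Defs.v *)
From Stdlib Require Import Reals.
From mathcomp Require Import all_boot.
Set Implicit Arguments. Unset Strict Implicit. Unset Printing Implicit Defensive.

Local Open Scope R_scope.

Definition sumR (n : nat) (F : 'I_n -> R) : R := \big[Rplus/R0]_(i < n) F i.

Definition vec (q : nat) := 'I_q -> R.
Definition vadd q (u v : vec q) : vec q := fun k => u k + v k.
Definition vsub q (u v : vec q) : vec q := fun k => u k - v k.
Definition vscale q (a : R) (u : vec q) : vec q := fun k => a * u k.
Definition vzero q : vec q := fun _ => 0.
Definition dot q (u v : vec q) : R := sumR (fun k => u k * v k).
Definition vnorm q (u : vec q) : R := sqrt (dot u u).
Fixpoint vsum1 q (G : nat -> vec q) (k : nat) : vec q :=
  match k with O => @vzero q | S k' => vadd (vsum1 G k') (G (S k')) end.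
Definition comb q (t : R) (x y : vec q) : vec q :=
  vadd (vscale t x) (vscale (1 - t) y).

Inductive ereal := EFin (r : R) | EInf.
Definition eplus (a b : ereal) : ereal :=
  match a, b with EFin x, EFin y => EFin (x + y) | _, _ => EInf end.
Definition ele (a b : ereal) : Prop :=
  match a, b with
  | EFin x, EFin y => x <= y
  | _, EInf => True
  | EInf, EFin _ => False
  end.
Definition elt_fin (a : R) (b : ereal) : Prop :=
  match b with EFin y => a < y | EInf => True end.
Fixpoint esum1 (G : nat -> ereal) (k : nat) : ereal :=
  match k with O => EFin 0 | S k' => eplus (esum1 G k') (G (S k')) end.
Definition esumI (n : nat) (G : 'I_n -> ereal) : ereal :=
  \big[eplus/EFin 0]_(i < n) G i.

(* proper, closed (= lower semicontinuous), convex extended-valued functions *)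
Definition proper_fun q (f : vec q -> ereal) : Prop :=
  exists x r, f x = EFin r.
Definition closed_fun q (f : vec q -> ereal) : Prop :=
  forall (x : vec q) (a : R), elt_fin a (f x) ->
    exists delta, 0 < delta /\
      forall y, vnorm (vsub y x) < delta -> elt_fin a (f y).
Definition convex_fun q (f : vec q -> ereal) : Prop :=
  forall (x y : vec q) (rx ry t : R), f x = EFin rx -> f y = EFin ry ->
    0 <= t <= 1 -> ele (f (comb t x y)) (EFin (t * rx + (1 - t) * ry)).

Definition strongly_convex q (c : R) (f : vec q -> R) : Prop :=
  forall (x y : vec q) (t : R), 0 <= t <= 1 ->
    f (comb t x y) <= t * f x + (1 - t) * f y
                      - c / 2 * t * (1 - t) * (vnorm (vsub x y)) ^ 2.

Definition has_gradient q (f : vec q -> R) (g : vec q -> vec q) : Prop :=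
  forall (x : vec q) (eps : R), 0 < eps -> exists delta, 0 < delta /\
    forall y, vnorm (vsub y x) < delta ->
      Rabs (f y - f x - dot (g x) (vsub y x)) <= eps * vnorm (vsub y x).

Definition C2_with_gradient q (f : vec q -> R) (g : vec q -> vec q) : Prop :=
  has_gradient f g /\
  exists Hs : vec q -> 'I_q -> 'I_q -> R,
    (forall (x : vec q) (eps : R), 0 < eps -> exists delta, 0 < delta /\
       forall y, vnorm (vsub y x) < delta ->
         vnorm (vsub (vsub (g y) (g x)) (fun k => sumR (fun l => Hs x k l * (y l - x l))))
           <= eps * vnorm (vsub y x)) /\
    (forall (x : vec q) (eps : R), 0 < eps -> exists delta, 0 < delta /\
       forall y, vnorm (vsub y x) < delta ->
         forall k l, Rabs (Hs y k l - Hs x k l) < eps).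

Definition is_prox q (f : vec q -> ereal) (theta p : vec q) : Prop :=
  forall delta : vec q,
    ele (eplus (f p) (EFin (/2 * (vnorm (vsub p theta)) ^ 2)))
        (eplus (f delta) (EFin (/2 * (vnorm (vsub delta theta)) ^ 2))).

(* graph: a i j > 0 iff agent i receives from agent j (edge j -> i) *)
Inductive reach n (a : 'I_n -> 'I_n -> R) : 'I_n -> 'I_n -> Prop :=
| reach_refl i : reach a i i
| reach_step i j k : reach a i j -> 0 < a k j -> reach a i k.
Definition strongly_connected n (a : 'I_n -> 'I_n -> R) : Prop :=
  forall i j, reach a i j.
Definition laplacian n (a : 'I_n -> 'I_n -> R) (i k : 'I_n) : R :=
  (if i == k then sumR (fun l => a i l) else 0) - a i k.

Definition objective n q m (f0 : 'I_n -> vec q -> R)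
  (fj : 'I_n -> nat -> vec q -> ereal) (x : 'I_n -> vec q) : ereal :=
  esumI (fun i => eplus (EFin (f0 i (x i))) (esum1 (fun j => fj i j (x i)) m)).
Definition constraint n q (d x : 'I_n -> vec q) : Prop :=
  forall k : 'I_q, sumR (fun i => x i k) = sumR (fun i => d i k).
Definition is_solution n q m f0 fj (d x : 'I_n -> vec q) : Prop :=
  constraint d x /\
  forall y, constraint d y -> ele (@objective n q m f0 fj x) (objective m f0 fj y).

(* Main.v *)
From HB Require Import structures.
Require Import Defs.
From Stdlib Require Import Reals Lra FunctionalExtensionality.
From mathcomp Require Import all_boot.
Set Implicit Arguments. Unset Strict Implicit.
Local Open Scope R_scope.

HB.instance Definition _ := Monoid.isComLaw.Build R R0 Rplus
  (fun x y z => esym (Rplus_assoc x y z)) Rplus_comm Rplus_0_l.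

Lemma sumR_add n (F G : 'I_n -> R) :
  sumR (fun k => F k + G k) = sumR F + sumR G.
Proof. by rewrite /sumR big_split. Qed.

Lemma sumR_scal n c (F : 'I_n -> R) :
  sumR (fun k => c * F k) = c * sumR F.
Proof.
rewrite /sumR; apply: (big_ind2 (fun a b => a = c * b)).
- by rewrite Rmult_0_r.
- by move=> ? ? ? ? -> ->; rewrite Rmult_plus_distr_l.
- by [].
Qed.

Lemma sumR_le n (F G : 'I_n -> R) : (forall k, F k <= G k) -> sumR F <= sumR G.
Proof.
move=> H; rewrite /sumR; apply: (big_ind2 (fun a b => a <= b)).
- lra.
- move=> ? ? ? ?; lra.
- by [].
Qed.

Lemma sumR_ext n (F G : 'I_n -> R) : (forall k, F k = G k) -> sumR F = sumR G.
Proof. by move=> H; rewrite /sumR; apply: eq_bigr. Qed.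

Lemma sumR_nonneg n (F : 'I_n -> R) : (forall k, 0 <= F k) -> 0 <= sumR F.
Proof.
move=> H; rewrite /sumR; apply: (big_ind (fun a => 0 <= a)) => //; [lra|move=> ? ?; lra].
Qed.

Lemma sumR_exch n p (F : 'I_n -> 'I_p -> R) :
  sumR (fun i => sumR (fun k => F i k)) = sumR (fun k => sumR (fun i => F i k)).
Proof. by rewrite /sumR exchange_big. Qed.

Lemma sumR_if n (k : 'I_n) (G : 'I_n -> R) :
  sumR (fun l => if k == l then G l else 0) = G k.
Proof.
rewrite /sumR (bigD1 k) //= eqxx big1 ?Rplus_0_r // => i /negPf.
by rewrite eq_sym => ->.
Qed.

Lemma sumR_nonneg_eq0 n (F : 'I_n -> R) : (forall k, 0 <= F k) -> sumR F = 0 ->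
  forall j, F j = 0.
Proof.
move=> H0 Hs j; have := Hs; rewrite /sumR (bigD1 j) //=.
have : 0 <= \big[Rplus/R0]_(i < n | i != j) F i.
  apply: (big_ind (fun a => 0 <= a)) => //; [lra|move=> ? ?; lra].
move: (\big[Rplus/R0]_(i < n | i != j) F i) => S HS E.
have := H0 j; lra.
Qed.

Lemma small_lim A B C : 0 <= C -> (forall t, 0 < t <= 1 -> A <= B + t*C) -> A <= B.
Proof.
move=> HC H; case: (Rle_lt_dec A B) => // Hlt.
set e := A - B.
have He : 0 < e by rewrite /e; lra.
have Hec : 0 < e + C by lra.
set t := e / (e + C).
have Ht0 : 0 < t by apply: Rdiv_lt_0_compat.
have Hte : t * (e + C) = e by rewrite /t; field; lra.
have Ht1 : t <= 1 by nra.
have := H t (conj Ht0 Ht1).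
rewrite /e in Hte; nra.
Qed.

Lemma dot_ge0 q (u : vec q) : 0 <= dot u u.
Proof. by apply: sumR_nonneg => k; nra. Qed.

Lemma vnorm_sq q (u : vec q) : vnorm u ^ 2 = dot u u.
Proof. by rewrite /vnorm pow2_sqrt //; apply: dot_ge0. Qed.

Lemma dot_expand q (A B : vec q) t :
  dot (fun k => A k + t * B k) (fun k => A k + t * B k)
  = dot A A + 2 * t * dot A B + t ^ 2 * dot B B.
Proof.
rewrite /dot; transitivity (sumR (fun k => A k * A k + (2 * t) * (A k * B k)
   + t ^ 2 * (B k * B k))); first by apply: sumR_ext => k; ring.
by rewrite !sumR_add !sumR_scal.
Qed.

Lemma dot_opp_l q (A B : vec q) : dot (fun k => - A k) B = - dot A B.
Proof.
rewrite /dot; transitivity (sumR (fun k => (-1) * (A k * B k))).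
  by apply: sumR_ext => k; ring.
rewrite sumR_scal; ring.
Qed.

Lemma prox_sub q (f : vec q -> ereal) theta p :
  proper_fun f -> convex_fun f -> is_prox f theta p ->
  exists fp, f p = EFin fp /\ forall y fy, f y = EFin fy ->
     fp + dot (vsub theta p) (vsub y p) <= fy.
Proof.
move=> [x0 [r0 Hr0]] Hcv Hp.
have [fp Hfp] : exists fp, f p = EFin fp.
  have := Hp x0; rewrite Hr0; case: (f p) => [fp|] /= => [_|[]]; by exists fp.
exists fp; split => // y fy Hfy.
apply: (@small_lim _ _ (/2 * dot (vsub y p) (vsub y p))).
  have := dot_ge0 (vsub y p); lra.
move=> t Ht.
have Ht' : 0 <= t <= 1 by lra.
have Hc := Hcv y p fy fp t Hfy Hfp Ht'.
case E: (f (comb t y p)) Hc => [r|] //= Hr.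
have := Hp (comb t y p); rewrite Hfp E !vnorm_sq.
have -> : vsub (comb t y p) theta = (fun k => vsub p theta k + t * vsub y p k).
  by apply: functional_extensionality => k; rewrite /vsub /comb /vadd /vscale; ring.
rewrite dot_expand.
have -> : vsub theta p = (fun k => - vsub p theta k).
  by apply: functional_extensionality => k; rewrite /vsub; ring.
rewrite dot_opp_l.
move: (dot (vsub p theta) (vsub p theta)) (dot (vsub p theta) (vsub y p))
  (dot (vsub y p) (vsub y p)) => D X Q H.
rewrite /= in H.
have H2 : t * (fp - X - fy - t * (/2 * Q)) <= 0 by nra.
nra.
Qed.

Lemma dot_scal_r q (A B : vec q) t : dot A (fun k => t * B k) = t * dot A B.
Proof.
rewrite /dot -sumR_scal; apply: sumR_ext => k; ring.
Qed.

Lemma vnorm_scal q (u : vec q) t : 0 <= t -> vnorm (fun k => t * u k) = t * vnorm u.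
Proof.
move=> Ht; rewrite /vnorm.
have -> : dot (fun k => t * u k) (fun k => t * u k) = (t * t) * dot u u.
  rewrite /dot -sumR_scal; apply: sumR_ext => k; ring.
rewrite sqrt_mult_alt; last by nra.
by rewrite sqrt_square.
Qed.

Lemma grad_ineq q (f : vec q -> R) g c : has_gradient f g -> 0 <= c ->
  strongly_convex c f -> forall x y, f x + dot (g x) (vsub y x) <= f y.
Proof.
move=> Hg Hc Hsc x y.
set u := vsub y x; set N := vnorm u.
have HN : 0 <= N by apply: sqrt_pos.
apply: (@small_lim _ _ N) => // eps Heps.
have [delta [Hd Hdel]] := Hg x eps (proj1 Heps).
set t := delta / (2 * (N + delta)).
have Hte : t * (2 * (N + delta)) = delta by rewrite /t; field; lra.
have Ht0 : 0 < t by rewrite /t; apply: Rdiv_lt_0_compat; lra.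
have Ht1 : t <= 1 by nra.
have HtN : t * N < delta by nra.
have Hv : vsub (comb t y x) x = (fun k => t * u k).
  by apply: functional_extensionality => k; rewrite /u /vsub /comb /vadd /vscale; ring.
have := Hdel (comb t y x); rewrite Hv vnorm_scal; last lra.
move=> /(_ HtN); rewrite dot_scal_r => Habs.
have Hlow := Rle_abs (- (f (comb t y x) - f x - t * dot (g x) u)).
rewrite Rabs_Ropp in Hlow.
have Hs := Hsc y x t (conj (Rlt_le _ _ Ht0) Ht1).
have Hpos : 0 <= c / 2 * t * (1 - t) * vnorm (vsub y x) ^ 2.
  apply: Rmult_le_pos; last by apply: pow_le; apply: sqrt_pos.
  apply: Rmult_le_pos; last lra.
  apply: Rmult_le_pos; lra.
move: Hs Hpos Habs Hlow; rewrite -/u.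
move: (f (comb t y x)) (dot (g x) u) (vnorm u ^ 2) => F D W Hs Hpos Habs Hlow.
rewrite -/N in Habs; clearbody t N.
have : t * (f y - f x - D + eps * N) >= 0 by nra.
nra.
Qed.

Definition efin (e : ereal) : R := match e with EFin r => r | EInf => 0 end.
Fixpoint rsum1 (g : nat -> R) (k : nat) : R :=
  match k with O => 0 | S k' => rsum1 g k' + g (S k') end.

Lemma esum1_fin G k : (forall j, (1 <= j <= k)%N -> G j = EFin (efin (G j))) ->
  esum1 G k = EFin (rsum1 (fun j => efin (G j)) k).
Proof.
elim: k => [|k IH] H //=.
rewrite IH; last by move=> j /andP [H1 H2]; apply: H; rewrite H1 /= ltnW.
by rewrite H // leqnn andbT.
Qed.

Lemma esum1_inv G k r : esum1 G k = EFin r ->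
  (forall j, (1 <= j <= k)%N -> G j = EFin (efin (G j))) /\
  r = rsum1 (fun j => efin (G j)) k.
Proof.
elim: k r => [|k IH] r /=.
  by move=> [<-]; split => // j /andP [H1 H2]; move: (leq_trans H1 H2).
case E1: (esum1 G k) => [r1|] //; case E2: (G k.+1) => [r2|] // [<-].
have [H1 H2] := IH _ E1; split.
  move=> j /andP [Hj1 Hj2]; case: (ltngtP j k.+1) Hj2 => // [Hlt|->] _.
    by apply: H1; rewrite Hj1.
  by rewrite E2.
by rewrite /= -H2.
Qed.

Lemma dot_add_l q (A B C : vec q) : dot (vadd A B) C = dot A C + dot B C.
Proof. by rewrite /dot -sumR_add; apply: sumR_ext => k; rewrite /vadd; ring. Qed.

Lemma dot_zero_l q (C : vec q) : dot (@vzero q) C = 0.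
Proof.
rewrite /dot (@sumR_ext _ _ (fun k => 0 * C k)); last by move=> k; rewrite /vzero.
rewrite sumR_scal; ring.
Qed.

Lemma dot_z q (x z u : vec q) gamma :
  dot (vsub (vsub x (vscale gamma z)) x) u = - gamma * dot z u.
Proof.
rewrite /dot -sumR_scal; apply: sumR_ext => k; rewrite /vsub /vscale; ring.
Qed.

Lemma dot_m q (x g v S u : vec q) gamma :
  dot (vsub (vadd (vadd (vsub x g) v) (vscale gamma S)) x) u
  = - dot g u + dot v u + gamma * dot S u.
Proof.
rewrite /dot -dot_opp_l /dot -sumR_scal -!sumR_add; apply: sumR_ext => k.
rewrite /vsub /vadd /vscale; ring.
Qed.

Lemma agent q m (Hm : (2 <= m)%N) (f0 : vec q -> R) g0 (fj : nat -> vec q -> ereal)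
  c gamma (xi yi vi : vec q) (zs : nat -> vec q) :
  has_gradient f0 g0 -> 0 <= c -> strongly_convex c f0 ->
  (forall j, (1 <= j <= m)%N -> proper_fun (fj j)) ->
  (forall j, (1 <= j <= m)%N -> convex_fun (fj j)) ->
  is_prox (fj m) (vadd (vadd (vsub xi (g0 xi)) vi) (vscale gamma (vsum1 zs (m - 1)))) xi ->
  (forall j, (1 <= j <= m - 1)%N -> is_prox (fj j) (vsub xi (vscale gamma (zs j))) xi) ->
  exists a, eplus (EFin (f0 xi)) (esum1 (fun j => fj j xi) m) = EFin a /\
   forall b, eplus (EFin (f0 yi)) (esum1 (fun j => fj j yi) m) = EFin b ->
     a + dot vi (vsub yi xi) <= b.
Proof.
move=> Hg Hc Hsc Hpr Hcv Hpm Hpz.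
have Em : m = (m - 1).+1 by rewrite subn1 prednK // ltnW.
have Hm1 : (1 <= m <= m)%N by rewrite leqnn andbT ltnW.
have Hjm : forall j, (1 <= j <= m - 1)%N -> (1 <= j <= m)%N.
  move=> j /andP [H1 H2]; rewrite H1 /=; apply: (leq_trans H2); exact: leq_subr.
have [fm [Hfm Hsm]] := prox_sub (Hpr _ Hm1) (Hcv _ Hm1) Hpm.
have HX : forall j, (1 <= j <= m)%N -> fj j xi = EFin (efin (fj j xi)).
  move=> j Hj; case: (eqVneq j m) => [->|Hne]; first by rewrite Hfm.
  have Hj2 : (1 <= j <= m - 1)%N.
    case/andP: Hj => -> Hjm' /=; rewrite -ltnS -Em ltn_neqAle Hne Hjm'.
    done.
  have [fp [Hfp _]] := prox_sub (Hpr _ Hj) (Hcv _ Hj) (Hpz _ Hj2).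
  by rewrite Hfp.
set u := vsub yi xi.
exists (f0 xi + rsum1 (fun j => efin (fj j xi)) m); split.
  by rewrite esum1_fin.
move=> b; case E: (esum1 (fun j => fj j yi) m) => [r|] //= [<-].
have [Hy Hr] := esum1_inv E; subst r.
have Hsplit : forall g, rsum1 g m = rsum1 g (m - 1) + g m.
  by move=> g; rewrite {1}Em /= -Em.
have Hind : forall k, (k <= m - 1)%N ->
  rsum1 (fun j => efin (fj j xi)) k - gamma * dot (vsum1 zs k) u
  <= rsum1 (fun j => efin (fj j yi)) k.
  elim=> [|k IH] Hk /=.
    rewrite dot_zero_l; lra.
  have Hk2 : (1 <= k.+1 <= m - 1)%N by rewrite Hk.
  have [fp [Hfp Hs]] := prox_sub (Hpr _ (Hjm _ Hk2)) (Hcv _ (Hjm _ Hk2)) (Hpz _ Hk2).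
  have := Hs yi _ (Hy _ (Hjm _ Hk2)); rewrite dot_z Hfp /= dot_add_l.
  have := IH (ltnW Hk); rewrite -/u; lra.
have H1 := Hind _ (leqnn _).
have H2 := Hsm yi _ (Hy _ Hm1); rewrite dot_m -/u in H2.
have H3 := grad_ineq Hg Hc Hsc xi yi; rewrite -/u in H3.
rewrite !Hsplit Hfm /=; lra.
Qed.

Lemma seq_max (T : eqType) (F : T -> R) (s : seq T) x0 :
  exists M, forall y, y \in x0 :: s -> F y <= F M.
Proof.
elim: s x0 => [|y0 s IH] x0.
  by exists x0 => y; rewrite inE => /eqP ->; lra.
have [M HM] := IH y0.
case: (Rle_lt_dec (F x0) (F M)) => H.
  exists M => y; rewrite in_cons => /orP [/eqP -> //|]; exact: HM.
exists x0 => y; rewrite in_cons => /orP [/eqP ->|Hy]; first lra.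
have := HM y Hy; lra.
Qed.

Lemma fin_max n (F : 'I_n -> R) (i0 : 'I_n) : exists M, forall y, F y <= F M.
Proof.
have [M HM] := seq_max F (enum 'I_n) i0.
by exists M => y; apply: HM; rewrite in_cons mem_enum orbT.
Qed.

Lemma reach_P n (a : 'I_n -> 'I_n -> R) (P : 'I_n -> Prop) :
  (forall k j, P k -> 0 < a k j -> P j) -> forall i k, reach a i k -> P k -> P i.
Proof.
move=> HP i k; elim => // i' j k' _ IH Ha Pk; apply: IH; exact: HP Pk Ha.
Qed.

Lemma sum_const_zero n (V U : 'I_n -> R) : (forall i l, V i = V l) -> sumR U = 0 ->
  sumR (fun i => V i * U i) = 0.
Proof.
case: n V U => [|n] V U HV HU; first by rewrite /sumR big_ord0.
rewrite (@sumR_ext _ _ (fun i => V ord0 * U i)); last by move=> i; rewrite (HV i ord0).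
by rewrite sumR_scal HU Rmult_0_r.
Qed.

Lemma esum_seq (I : eqType) (s : seq I) (G : I -> ereal) r :
  \big[eplus/EFin 0]_(j <- s) G j = EFin r -> forall i, i \in s -> G i = EFin (efin (G i)).
Proof.
elim: s r => [|x s IH] r; first by [].
rewrite big_cons; case E1: (G x) => [r1|] //; case E2: (\big[eplus/EFin 0]_(j <- s) G j) => [r2|] // _.
move=> i; rewrite in_cons => /orP [/eqP ->|Hi]; first by rewrite E1.
exact: IH E2 _ Hi.
Qed.

Lemma esumI_fin n (G : 'I_n -> ereal) : (forall i, G i = EFin (efin (G i))) ->
  esumI G = EFin (sumR (fun i => efin (G i))).
Proof.
move=> H; rewrite /esumI /sumR.
apply: (big_ind2 (fun e r => e = EFin r)) => //.
- by move=> ? ? ? ? -> ->.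
Qed.
Theorem lemma4
  (n q m : nat) (Hm : (2 <= m)%N)
  (f0 : 'I_n -> vec q -> R) (grad0 : 'I_n -> vec q -> vec q)
  (fj : 'I_n -> nat -> vec q -> ereal)
  (d : 'I_n -> vec q) (a : 'I_n -> 'I_n -> R) (h : 'I_n -> R)
  (c alpha gamma : R)
  (* (A1) *)
  (HC2 : forall i, C2_with_gradient (f0 i) (grad0 i))
  (Hc : (INR m - 1 < c))
  (Hsc : forall i, strongly_convex c (f0 i))
  (* (A2) *)
  (Hproper : forall i j, (1 <= j <= m)%N -> proper_fun (fj i j))
  (Hclosed : forall i j, (1 <= j <= m)%N -> closed_fun (fj i j))
  (Hconvex : forall i j, (1 <= j <= m)%N -> convex_fun (fj i j))
  (* (A3) *)
  (Ha_nonneg : forall i k, (0 <= a i k))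
  (Ha_diag : forall i, a i i = 0)
  (Hconn : strongly_connected a)
  (* h: positive normalized left eigenvector of the Laplacian *)
  (Hh_pos : forall i, (0 < h i))
  (Hh_left : forall k, sumR (fun i => h i * laplacian a i k) = 0)
  (Hh_sum : sumR h = 1)
  (* (A4) *)
  (Hfeas : exists y, constraint d y /\ exists r, objective m f0 fj y = EFin r)
  (Halpha : (0 < alpha))
  (Hgamma : (0 < gamma /\ gamma < / (INR m - 1)))
  (* equilibrium (x^*, z^*, v^*, w^* ) of Algorithm A *)
  (x : 'I_n -> vec q) (z : nat -> 'I_n -> vec q) (v w : 'I_n -> vec q)
  (Eq_x : forall i,
     is_prox (fj i m)
       (vadd (vadd (vsub (x i) (grad0 i (x i))) (v i))
             (vscale gamma (vsum1 (fun j => z j i) (m - 1)))) (x i))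
  (Eq_z : forall j i, (1 <= j <= m - 1)%N ->
     is_prox (fj i j) (vsub (x i) (vscale gamma (z j i))) (x i))
  (Eq_v : forall i k,
     (- ((x i k - d i k) / h i)
      - alpha * sumR (fun l => laplacian a i l * v l k) - w i k = 0))
  (Eq_w : forall i k, (alpha * sumR (fun l => laplacian a i l * v l k) = 0))
  (Hw : forall k, sumR (fun i => h i * w i k) = 0) :
  is_solution m f0 fj d x.
Proof.
have Hrow : forall i k, sumR (fun l => laplacian a i l * v l k) = 0.
  move=> i k; have := Eq_w i k; move: (sumR _) => S E; nra.
have Hconst : forall k i l, v i k = v l k.
  move=> k i i'.
  have [M HM] := fin_max (fun j => v j k) i.
  have HP : forall j, v j k = v M k.
    move=> j; apply: (@reach_P _ a (fun j => v j k = v M k) _ j M (Hconn j M)) => //.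
    move=> k0 j0 Pk Ha.
    have Hz : sumR (fun l => a k0 l * (v k0 k - v l k)) = 0.
      rewrite -(Hrow k0 k).
      rewrite (@sumR_ext _ (fun l => laplacian a k0 l * v l k)
        (fun l => (if k0 == l then sumR (fun l => a k0 l) * v l k else 0)
                  + (-1) * (a k0 l * v l k))); last first.
        by move=> l; rewrite /laplacian; case: (k0 == l); ring.
      rewrite sumR_add sumR_if sumR_scal.
      rewrite (@sumR_ext _ (fun l => a k0 l * (v k0 k - v l k)) (fun l => v k0 k * a k0 l + (-1) * (a k0 l * v l k))); last first.
        by move=> l; ring.
      rewrite sumR_add sumR_scal sumR_scal (Rmult_comm (sumR _) (v k0 k)); reflexivity.
    have := sumR_nonneg_eq0 _ Hz j0.
    have Hnn : forall l, 0 <= a k0 l * (v k0 k - v l k).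
      move=> l; apply: Rmult_le_pos => //; have := HM l; rewrite /= in Pk *; lra.
    move=> /(_ Hnn) /Rmult_integral [E|E]; first lra.
    rewrite /= in Pk; lra.
  by rewrite (HP i) (HP i').
have Hxd : forall i k, x i k - d i k = - (h i * w i k).
  move=> i k; have := Eq_v i k; rewrite (Eq_w i k) => E.
  have Hh := Hh_pos i.
  have E2 : (x i k - d i k) / h i = - w i k by lra.
  have -> : x i k - d i k = h i * ((x i k - d i k) / h i) by field; lra.
  rewrite E2; ring.
have Hcons : constraint d x.
  move=> k.
  rewrite (@sumR_ext _ (fun i => x i k) (fun i => d i k + (-1) * (h i * w i k))); last first.
    by move=> i; have := Hxd i k; lra.
  by rewrite sumR_add sumR_scal Hw; ring.
split => // y Hy.
have Hc0 : 0 <= c.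
  have : 1 <= INR m by apply: (le_INR 1); apply/leP; exact: ltnW.
  lra.
set Gx := fun i => eplus (EFin (f0 i (x i))) (esum1 (fun j => fj i j (x i)) m).
set Gy := fun i => eplus (EFin (f0 i (y i))) (esum1 (fun j => fj i j (y i)) m).
have Hag : forall i, Gx i = EFin (efin (Gx i)) /\
   forall b, Gy i = EFin b -> efin (Gx i) + dot (v i) (vsub (y i) (x i)) <= b.
  move=> i.
  have [A [HA HB]] := @agent q m Hm (f0 i) (grad0 i) (fj i) c gamma (x i) (y i) (v i)
    (fun j => z j i) (proj1 (HC2 i)) Hc0 (Hsc i) (Hproper i) (Hconvex i) (Eq_x i)
    (fun j Hj => Eq_z j i Hj).
  by rewrite /Gx /Gy HA /=; split.
rewrite /objective -/Gx -/Gy.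
case E: (esumI Gy) => [r|]; last by case: (esumI Gx).
have HGy : forall i, Gy i = EFin (efin (Gy i)).
  move=> i; apply: (esum_seq E); exact: mem_index_enum.
rewrite esumI_fin; last by move=> i; exact: (proj1 (Hag i)).
rewrite esumI_fin in E => //; case: E => <- /=.
have Hs : sumR (fun i => dot (v i) (vsub (y i) (x i))) = 0.
  rewrite /dot sumR_exch; rewrite /sumR big1 // => k _.
  apply: sum_const_zero => [i l|]; first exact: Hconst.
  rewrite /vsub (@sumR_ext _ _ (fun i => y i k + (-1) * x i k)); last by move=> i; ring.
  by rewrite sumR_add sumR_scal Hy Hcons; ring.
have Hle : sumR (fun i => efin (Gx i) + dot (v i) (vsub (y i) (x i))) <= sumR (fun i => efin (Gy i)).
  apply: sumR_le => i; apply: (proj2 (Hag i)); exact: HGy.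
rewrite sumR_add Hs in Hle; lra.
Qed.
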